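(* Let $(X,\mathcal{A})$ be a measurable space, $f,g\in\mathcal{F}_{[0,1]}^{(X,\mathcal{A})}$ comonotone, and $\star:[0,1]^2\to[0,1]$ continuous, non-decreasing in both arguments and bounded from above by the minimum ($a\star b\le\min(a,b)$). Then for every monotone measure $m$ on $(X,\mathcal{A})$ with $m(X)=1$ and all $\alpha,\beta,\gamma,\lambda,\upsilon,\tau\in(0,\infty)$ with $0<\alpha\lambda\le1$, $\beta\upsilon\ge1$, $\gamma\tau\ge1$, $\lambda\le\tau$ and $\lambda\le\upsilon$, \[ \big[\mathbf{Su}(m,(f\star g)^{\alpha})\big]^{\lambda}\ \ge\ \big[\mathbf{Su}(m,f^{\beta})\big]^{\upsilon}\star\big[\mathbf{Su}(m,g^{\gamma})\big]^{\tau}. \]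
   Context: A monotone measure on $(X,\mathcal{A})$ is $m:\mathcal{A}\to[0,\infty]$ with $m(\emptyset)=0$, $m(X)>0$, $m(A)\le m(B)$ for $A\subseteq B$. $\mathcal{F}_{[0,1]}^{(X,\mathcal{A})}$ is the set of $\mathcal{A}$-measurable $f:X\to[0,1]$. The Sugeno integral is $\mathbf{Su}(m,f)=\sup\{\min(t,m(\{f\ge t\})) : t\in(0,\infty]\}$. $f,g$ are comonotone if $(f(x)-f(y))(g(x)-g(y))\ge0$ for all $x,y$. Operations on functions are pointwise. *)

(* Defs.v *)
From HB Require Import structures.
From mathcomp Require Import all_boot all_order all_algebra.
From mathcomp Require Import all_classical all_reals all_analysis.
Set Implicit Arguments. Unset Strict Implicit. Unset Printing Implicit Defensive.
Import Order.TTheory GRing.Theory Num.Theory.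
Local Open Scope classical_set_scope.
Local Open Scope ring_scope.

(* monotone measure on (X, A): m(emptyset)=0, m(X)>0, values in [0,oo],
   monotone w.r.t. inclusion of measurable sets. Values on non-measurable
   sets are irrelevant. *)
Definition monotone_measure (d : measure_display) (T : measurableType d)
  (R : realType) (m : set T -> \bar R) : Prop :=
  [/\ m set0 = 0%E,
      (forall A, measurable A -> (0 <= m A)%E),
      (0 < m setT)%E &
      (forall A B, measurable A -> measurable B -> A `<=` B -> (m A <= m B)%E)].

Definition unit_mfun (d : measure_display) (T : measurableType d)
  (R : realType) (f : T -> R) : Prop :=
  measurable_fun setT f /\ (forall x, 0 <= f x <= 1).

Definition comonotone (T : Type) (R : realType) (f g : T -> R) : Prop :=
  forall x y, 0 <= (f x - f y) * (g x - g y).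

Definition sugeno (d : measure_display) (T : measurableType d) (R : realType)
  (m : set T -> \bar R) (f : T -> R) : \bar R :=
  ereal_sup [set Order.min t (m [set x | (t <= (f x)%:E)%E]) | t in [set t : \bar R | (0 < t)%E]].

(* Main.v *)
Require Import Defs.
From HB Require Import structures.
From mathcomp Require Import all_boot all_order all_algebra.
From mathcomp Require Import all_classical all_reals all_analysis.
From mathcomp Require Import measurable_realfun lra.
Import Order.TTheory GRing.Theory Num.Theory numFieldNormedType.Exports.
Local Open Scope classical_set_scope.
Local Open Scope ring_scope.

Section Pw.
Context {R : realType}.
Implicit Types x y r s : R.

Lemma pw01 x r : 0 <= x <= 1 -> 0 <= r -> 0 <= x `^ r <= 1.
Proof.
move=> /andP[x0 x1] r0; rewrite powR_ge0 /=.
have := ge0_ler_powR r0 (x:=x) (y:=1); rewrite powR1; apply => //; rewrite nnegrE //.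
Qed.

Lemma pwmono x y r : 0 <= x -> x <= y -> 0 <= r -> x `^ r <= y `^ r.
Proof.
move=> x0 xy r0; apply: ge0_ler_powR => //; rewrite nnegrE //; exact: le_trans xy.
Qed.

Lemma pwexp x r s : 0 <= x <= 1 -> 0 < r -> r <= s -> x `^ s <= x `^ r.
Proof.
move=> /andP[x0 x1] r0 rs; case: (ltgtP x 0) x0 => // [xp _|-> _].
  by apply: ger_powR => //; rewrite xp.
rewrite !powR0 ?gt_eqF //; exact: lt_le_trans rs.
Qed.

Lemma pwinv x r : 0 <= x -> 0 < r -> (x `^ r^-1) `^ r = x.
Proof. by move=> x0 r0; rewrite -powRrM mulVf ?gt_eqF // powRr1. Qed.
End Pw.
Lemma comono_meas d (T : measurableType d) (R : realType) (f g : T -> R) (U : set T) :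
  measurable_fun setT f -> measurable_fun setT g -> comonotone f g ->
  (forall x y, U y -> f y <= f x -> g y <= g x -> U x) -> measurable U.
Proof.
move=> mf mg co Uup.
have co' : forall x y, f y < f x -> g y <= g x.
  move=> x y lt; have := co x y; rewrite pmulr_rge0 ?subr_gt0 //.
  by rewrite subr_ge0.
pose A := [set r : R | exists2 y, U y & f y < r].
have iA : is_interval A.
  move=> r s [y Uy ly] _ z /andP[rz _]; exists y => //; exact: lt_le_trans rz.
have mA : measurable (f @^-1` A).
  by rewrite -[_ @^-1` _]setTI; apply: mf => //; exact: is_interval_measurable.
have AU : forall x, A (f x) -> U x.
  move=> x [y Uy lt]; apply: (Uup x y) => //; [exact: ltW | exact: co'].
case: (pselect (exists2 x0, U x0 & ~ A (f x0))) => [[x0 Ux0 nA]|nex].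
  pose C := [set r : R | exists2 y, U y /\ f y = f x0 & g y <= r].
  have iC : is_interval C.
    move=> r s [y Uy ly] _ z /andP[rz _]; exists y => //; exact: le_trans rz.
  have mC : measurable (g @^-1` C).
    by rewrite -[_ @^-1` _]setTI; apply: mg => //; exact: is_interval_measurable.
  have m1 : measurable (f @^-1` [set f x0]).
    by rewrite -[_ @^-1` _]setTI; apply: mf => //; exact: measurable_set1.
  suff -> : U = f @^-1` A `|` (f @^-1` [set f x0] `&` g @^-1` C).
    by apply: measurableU => //; exact: measurableI.
  apply/seteqP; split => x.
    move=> Ux; case: (pselect (A (f x))) => [Ax|nAx]; [by left|right].
    have fx : f x = f x0.
      apply/eqP; rewrite eq_le; apply/andP; split; rewrite leNgt; apply/negP => lt.
      - by apply: nAx; exists x0.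
      - by apply: nA; exists x.
    by split => //=; exists x.
  case=> [/AU //|[/= fx [y [Uy fy] gy]]].
  by apply: (Uup x y) => //; rewrite fy fx.
suff -> : U = f @^-1` A by [].
apply/seteqP; split => x; last exact: AU.
move=> Ux; apply: contrapT => nA; apply: nex; by exists x.
Qed.

Lemma cont_eps (R : realType) (A : set (R * R)) (F : R * R -> R) (P : R * R) :
  {within A, continuous F} -> A P -> forall e : R, 0 < e ->
  exists2 del : R, 0 < del & forall p, A p -> `|P.1 - p.1| < del -> `|P.2 - p.2| < del ->
   `|F P - F p| < e.
Proof.
move=> H AP e e0.
have HP : F @ within A (nbhs P) --> F P.
  have := H P; rewrite /continuous_at /from_subspace.
  by rewrite (nbhs_subspace_in AP).
move: HP; move/cvgrPdist_lt => /(_ e e0).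
rewrite /within /=.
move/nbhs_ballP => [del del0 Hb].
exists del => // p Ap h1 h2.
apply: Hb => //.

Qed.

Local Open Scope ereal_scope.

Section Sug.
Context d (X : measurableType d) (R : realType) (m : set X -> \bar R).
Hypothesis mm : monotone_measure m.
Hypothesis m1 : m setT = 1.

Lemma mL (h : X -> R) (t : \bar R) :
  (forall t : \bar R, measurable [set x | t <= (h x)%:E]) ->
  m [set x | t <= (h x)%:E] <= 1.
Proof.
case: mm => _ _ _ mono hm; rewrite -m1; apply: mono => //.
Qed.

Lemma sug01 (h : X -> R) :
  (forall t : \bar R, measurable [set x | t <= (h x)%:E]) ->
  0 <= sugeno m h <= 1.
Proof.
move=> hm; case: (mm) => _ pos _ _; apply/andP; split.
  apply: le_ereal_sup_tmp; exists (Order.min 1 (m [set x | 1 <= (h x)%:E])).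
    by exists 1 => //=; rewrite lte01.
  by rewrite le_min lee01 pos.
apply: ge_ereal_sup => _ [t _ <-]; rewrite ge_min; apply/orP; right; exact: mL.
Qed.

Lemma sug_gt (h : X -> R) (q : R) :
  (forall t : \bar R, measurable [set x | t <= (h x)%:E]) ->
  (0 <= q)%R -> q%:E < sugeno m h ->
  exists r : R, [/\ (q < r)%R, q%:E < m [set x | r%:E <= (h x)%:E] &
     exists x, (r <= h x)%R].
Proof.
move=> hm q0 /ereal_sup_gt [_ [t t0 <-]]; rewrite lt_min => /andP[qt qm].
case: (mm) => m0 _ _ _.
case: t t0 qt qm => [r | | //] _ qt qm.
- exists r; split => //.
  case: (pselect (exists x, (r <= h x)%R)) => // nex.
  move: qm; suff -> : [set x | r%:E <= (h x)%:E] = set0 by rewrite m0 lte_fin ltNge q0.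
  apply/seteqP; split => x //= rx; apply: nex; exists x; by rewrite -lee_fin.
- move: qm; suff -> : [set x | +oo <= (h x)%:E] = set0 by rewrite m0 lte_fin ltNge q0.
  by apply/seteqP; split => x //=; rewrite leye_eq.
Qed.

Lemma sug_ge (h : X -> R) (w : R) : (0 < w)%R ->
  Order.min w%:E (m [set x | w%:E <= (h x)%:E]) <= sugeno m h.
Proof.
move=> w0; apply: ereal_sup_ubound; exists w%:E => //=; by rewrite lte_fin.
Qed.
End Sug.
Arguments mL {d X R m}.
Arguments sug01 {d X R m}.
Arguments sug_gt {d X R m}.
Arguments sug_ge {d X R m}.
Local Close Scope ereal_scope.

Lemma co_lt (T : Type) (R : realType) (f g : T -> R) : comonotone f g ->
  forall x y, f y < f x -> g y <= g x.
Proof.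
move=> co x y lt; have := co x y; rewrite pmulr_rge0 ?subr_gt0 //.
by rewrite subr_ge0.
Qed.

Lemma fin01 (R : realType) (x : \bar R) : (0 <= x <= 1)%E ->
  x = (fine x)%:E /\ 0 <= fine x <= 1.
Proof. case: x => [r| |] //=; last by case/andP => _; rewrite leye_eq. Qed.
Arguments comono_meas {d T R f g U}.
Arguments cont_eps {R A F P}.
Arguments co_lt {T R f g}.
Arguments fin01 {R x}.
Arguments pwmono {R x y r}.
Arguments pwexp {R x r s}.
Arguments pw01 {R x r}.

Lemma core (d : measure_display) (X : measurableType d) (R : realType)
  (f g : X -> R) (star : R -> R -> R) (m : set X -> \bar R)
  (alpha beta gamma lambda upsilon tau A B C : R) :
  (forall x, 0 <= f x <= 1) -> (forall x, 0 <= g x <= 1) -> comonotone f g ->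
  (forall a b, 0 <= a <= 1 -> 0 <= b <= 1 -> 0 <= star a b <= 1) ->
  (forall a a' b b', 0 <= a <= 1 -> 0 <= a' <= 1 -> 0 <= b <= 1 -> 0 <= b' <= 1 ->
     a <= a' -> b <= b' -> star a b <= star a' b') ->
  (forall a b, 0 <= a <= 1 -> 0 <= b <= 1 -> star a b <= Num.min a b) ->
  monotone_measure m ->
  0 < alpha -> 0 < beta -> 0 < gamma -> 0 < lambda -> 0 < upsilon -> 0 < tau ->
  alpha * lambda <= 1 -> 1 <= beta * upsilon -> 1 <= gamma * tau ->
  lambda <= tau -> lambda <= upsilon ->
  (forall t : \bar R, measurable [set x | (t <= (f x `^ beta)%:E)%E]) ->
  (forall t : \bar R, measurable [set x | (t <= (g x `^ gamma)%:E)%E]) ->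
  (forall t : \bar R, measurable [set x | (t <= (star (f x) (g x) `^ alpha)%:E)%E]) ->
  sugeno m (fun x => f x `^ beta) = A%:E ->
  sugeno m (fun x => g x `^ gamma) = B%:E ->
  sugeno m (fun x => star (f x) (g x) `^ alpha) = C%:E ->
  0 <= A -> A <= 1 -> 0 <= B -> B <= 1 -> 0 <= C -> C <= 1 ->
  forall p1 p2, 0 <= p1 -> p1 < A `^ upsilon -> 0 <= p2 -> p2 < B `^ tau ->
    star p1 p2 <= C `^ lambda.
Proof.
move=> f01 g01 co sr mono smin mm a0 b0 c0 l0 u0 t0 al bu gt lt lu mLf mLg mLs
  SfE SgE SsE A0 A1 B0 B1 C0 C1 p1 p2 p10 p1A p20 p2B.
have bi : beta^-1 <= upsilon.
  by rewrite -(ler_pM2l b0) mulfV ?gt_eqF.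
have gi : gamma^-1 <= tau.
  by rewrite -(ler_pM2l c0) mulfV ?gt_eqF.
  set t1 := p1 `^ upsilon^-1; set t2 := p2 `^ tau^-1.
  have t10 : 0 <= t1 := powR_ge0 _ _.
  have t20 : 0 <= t2 := powR_ge0 _ _.
  have p1E : p1 = t1 `^ upsilon by rewrite pwinv.
  have p2E : p2 = t2 `^ tau by rewrite pwinv.
  have t1A : t1 < A.
    rewrite ltNge; apply/negP => At1; move: p1A; rewrite p1E ltNge.
    by rewrite (pwmono A0 At1 (ltW u0)).
  have t2B : t2 < B.
    rewrite ltNge; apply/negP => Bt2; move: p2B; rewrite p2E ltNge.
    by rewrite (pwmono B0 Bt2 (ltW t0)).
  have [r [t1r t1m [x0 rx0]]] := sug_gt mm (fun x => f x `^ beta) t1 mLf t10 (ltac:(by rewrite SfE lte_fin)).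
  have [s [t2s t2m [y0 sy0]]] := sug_gt mm (fun x => g x `^ gamma) t2 mLg t20 (ltac:(by rewrite SgE lte_fin)).
  have r0 : 0 < r by exact: le_lt_trans t1r.
  have s0 : 0 < s by exact: le_lt_trans t2s.
  have r1 : r <= 1.
    apply: le_trans rx0 _; case/andP: (pw01 (f01 x0) (ltW b0)) => //.
  have s1 : s <= 1.
    apply: le_trans sy0 _; case/andP: (pw01 (g01 y0) (ltW c0)) => //.
  set u := r `^ beta^-1; set v := s `^ gamma^-1.
  have u01 : 0 <= u <= 1 by apply: pw01; [rewrite (ltW r0) | rewrite invr_ge0 ltW].
  have v01 : 0 <= v <= 1 by apply: pw01; [rewrite (ltW s0) | rewrite invr_ge0 ltW].
  have p1u : p1 <= u.
    rewrite p1E; apply: (le_trans (pwmono t10 (ltW t1r) (ltW u0))).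
    by apply: pwexp => //; [rewrite (ltW r0) | rewrite invr_gt0].
  have p2v : p2 <= v.
    rewrite p2E; apply: (le_trans (pwmono t20 (ltW t2s) (ltW t0))).
    by apply: pwexp => //; [rewrite (ltW s0) | rewrite invr_gt0].
  have fu : forall x, (r%:E <= (f x `^ beta)%:E)%E -> u <= f x.
    move=> x; rewrite lee_fin => rx; case/andP: (f01 x) => fx0 _.
    have -> : f x = (f x `^ beta) `^ beta^-1 by rewrite -powRrM mulfV ?gt_eqF // powRr1.
    by apply: pwmono; [exact: ltW r0 | exact: rx | rewrite invr_ge0; exact: ltW b0].
  have gv : forall x, (s%:E <= (g x `^ gamma)%:E)%E -> v <= g x.
    move=> x; rewrite lee_fin => sx; case/andP: (g01 x) => gx0 _.
    have -> : g x = (g x `^ gamma) `^ gamma^-1 by rewrite -powRrM mulfV ?gt_eqF // powRr1.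
    by apply: pwmono; [exact: ltW s0 | exact: sx | rewrite invr_ge0; exact: ltW c0].
  have p101 : 0 <= p1 <= 1 by rewrite p10 (le_trans p1u) //; case/andP: u01.
  have p201 : 0 <= p2 <= 1 by rewrite p20 (le_trans p2v) //; case/andP: v01.
  have Zz : star p1 p2 <= star u v by apply: mono.
  have zz := sr u v u01 v01.
  case/andP: zz => z0 z1.
  case: (eqVneq (star u v) 0) => [z0' | zn0].
    by apply: le_trans Zz _; rewrite z0' powR_ge0.
  have zp : 0 < star u v by rewrite lt_neqAle eq_sym zn0 z0.
  set W := star u v `^ alpha.
  have Wp : 0 < W by apply: powR_gt0.
  have G : forall L : set X, measurable L ->
      L `<=` [set x | (W%:E <= (star (f x) (g x) `^ alpha)%:E)%E] ->
      forall q : R, 0 <= q -> (q%:E < m L)%E -> star p1 p2 <= q `^ lambda ->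
      star p1 p2 <= C `^ lambda.
    move=> L mL LW q q0 qm Zq.
    have := @sug_ge _ _ _ m (fun x => star (f x) (g x) `^ alpha) W Wp; rewrite SsE ge_min => /orP[WC|mC].
      apply: (le_trans Zz); apply: (le_trans _ (pwmono (ltW Wp) WC (ltW l0))).
      rewrite /W -powRrM; apply: ger1_powR => //; by rewrite zp.
    have qC : q <= C.
      rewrite -lee_fin; apply: (le_trans (ltW qm)); apply: le_trans mC.
      case: mm => _ _ _ mmono; apply: mmono => //; exact: mLs.
    exact: (le_trans Zq (pwmono q0 qC (ltW l0))).
  have LW : forall x, (r%:E <= (f x `^ beta)%:E)%E -> (s%:E <= (g x `^ gamma)%:E)%E ->
      (W%:E <= (star (f x) (g x) `^ alpha)%:E)%E.
    move=> x rx sx; rewrite lee_fin; apply: pwmono; [exact: ltW zp | | exact: ltW a0].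
    by apply: mono => //; [exact: fu | exact: gv].
  have Zmin := smin _ _ p101 p201.
  case: (pselect ([set x | (r%:E <= (f x `^ beta)%:E)%E] `<=`
                  [set x | (s%:E <= (g x `^ gamma)%:E)%E])) => [sub|nsub].
    apply: (G _ (mLf _) _ t1 t10 t1m).
      by move=> x Lx; apply: LW => //; exact: sub.
    apply: (le_trans Zmin); rewrite ge_min p1E; apply/orP; left.
    apply: pwexp => //; rewrite t10 /=; exact: ltW (lt_le_trans t1r r1).
  have [x1 Lx1 nLx1] : exists2 x, (r%:E <= (f x `^ beta)%:E)%E & ~ ((s%:E <= (g x `^ gamma)%:E)%E).
    apply: contrapT => nex; apply: nsub => x Lx; apply: contrapT => nLx.
    by apply: nex; exists x.
  have sub : [set x | (s%:E <= (g x `^ gamma)%:E)%E] `<=`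
             [set x | (r%:E <= (f x `^ beta)%:E)%E].
    move=> y /= Ly; apply: contrapT => nLy.
    have fl : f y < f x1.
      rewrite ltNge; apply/negP => fxy; apply: nLy; apply: (le_trans Lx1).
      rewrite lee_fin; apply: pwmono => //; [by case/andP: (f01 x1) | exact: ltW b0].
    have gl : g x1 < g y.
      rewrite ltNge; apply/negP => gxy; apply: nLx1; apply: (le_trans Ly).
      rewrite lee_fin; apply: pwmono => //; [by case/andP: (g01 y) | exact: ltW c0].
    by have := co_lt co _ _ fl; rewrite leNgt gl.
  apply: (G _ (mLg _) _ t2 t20 t2m).
    by move=> x Lx; apply: LW => //; exact: sub.
  apply: (le_trans Zmin); rewrite ge_min p2E; apply/orP; right.
  apply: pwexp => //; rewrite t20 /=; exact: ltW (lt_le_trans t2s s1).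
Qed.

Lemma final (R : realType) (star : R -> R -> R) (PA PB Cl : R) :
  {within [set p : R * R | 0 <= p.1 <= 1 /\ 0 <= p.2 <= 1],
     continuous (fun p : R * R => star p.1 p.2)} ->
  (forall a b, 0 <= a <= 1 -> 0 <= b <= 1 -> star a b <= Num.min a b) ->
  0 <= PA <= 1 -> 0 <= PB <= 1 -> 0 <= Cl ->
  (forall p1 p2, 0 <= p1 -> p1 < PA -> 0 <= p2 -> p2 < PB -> star p1 p2 <= Cl) ->
  star PA PB <= Cl.
Proof.
move=> cont smin PA01 PB01 hC K.
case: (eqVneq PA 0) => [PA0|PAn0].
  apply: le_trans (smin _ _ PA01 PB01) _; by rewrite ge_min PA0 hC.
case: (eqVneq PB 0) => [PB0|PBn0].
  apply: le_trans (smin _ _ PA01 PB01) _; by rewrite ge_min PB0 hC orbT.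
have PAp : 0 < PA by rewrite lt_neqAle eq_sym PAn0; case/andP: PA01.
have PBp : 0 < PB by rewrite lt_neqAle eq_sym PBn0; case/andP: PB01.
rewrite leNgt; apply/negP => H.
have e0 : 0 < star PA PB - Cl by rewrite subr_gt0.
have [del del0 Hd] := cont_eps (P:=(PA,PB)) cont (conj PA01 PB01) _ e0.
set p1 := Num.max 0 (PA - del / 2); set p2 := Num.max 0 (PB - del / 2).
have p10 : 0 <= p1 by rewrite le_max lexx.
have p20 : 0 <= p2 by rewrite le_max lexx.
have p1l : PA - del / 2 <= p1 by rewrite le_max lexx orbT.
have p2l : PB - del / 2 <= p2 by rewrite le_max lexx orbT.
have p1A : p1 < PA by rewrite gt_max PAp /= ltrBlDr ltrDl divr_gt0.
have p2B : p2 < PB by rewrite gt_max PBp /= ltrBlDr ltrDl divr_gt0.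
have Kp := K p1 p2 p10 p1A p20 p2B.
have Ap : 0 <= p1 <= 1 /\ 0 <= p2 <= 1.
  case/andP: PA01 => _ PA1; case/andP: PB01 => _ PB1.
  by rewrite p10 p20 /= (le_trans (ltW p1A)) // (le_trans (ltW p2B)).
have d1 : `|PA - p1| < del by rewrite ger0_norm ?subr_ge0 ?(ltW p1A) //; lra.
have d2 : `|PB - p2| < del by rewrite ger0_norm ?subr_ge0 ?(ltW p2B) //; lra.
have := Hd (p1, p2) Ap d1 d2 => /= hn.
have := ler_norm (star PA PB - star p1 p2); lra.
Qed.

Theorem corollary3p18 (d : measure_display) (X : measurableType d) (R : realType)
  (f g : X -> R) (star : R -> R -> R) :
  unit_mfun f -> unit_mfun g -> comonotone f g ->
  (forall a b, 0 <= a <= 1 -> 0 <= b <= 1 -> 0 <= star a b <= 1) ->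
  {within [set p : R * R | 0 <= p.1 <= 1 /\ 0 <= p.2 <= 1],
     continuous (fun p : R * R => star p.1 p.2)} ->
  (forall a a' b b', 0 <= a <= 1 -> 0 <= a' <= 1 -> 0 <= b <= 1 -> 0 <= b' <= 1 ->
     a <= a' -> b <= b' -> star a b <= star a' b') ->
  (forall a b, 0 <= a <= 1 -> 0 <= b <= 1 -> star a b <= Num.min a b) ->
  forall (m : set X -> \bar R), monotone_measure m -> m setT = 1%E ->
  forall alpha beta gamma lambda upsilon tau : R,
    0 < alpha -> 0 < beta -> 0 < gamma -> 0 < lambda -> 0 < upsilon -> 0 < tau ->
    alpha * lambda <= 1 -> 1 <= beta * upsilon -> 1 <= gamma * tau ->
    lambda <= tau -> lambda <= upsilon ->
    star (fine (sugeno m (fun x => f x `^ beta)) `^ upsilon)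
         (fine (sugeno m (fun x => g x `^ gamma)) `^ tau)
    <= fine (sugeno m (fun x => star (f x) (g x) `^ alpha)) `^ lambda.
Proof.
move=> [mf f01] [mg g01] co sr cont mono smin m mm m1 alpha beta gamma lambda upsilon tau
  a0 b0 c0 l0 u0 t0 al bu gt lt lu.
have lvl : forall (F G : X -> R) (Phi : R -> R -> R), measurable_fun setT F ->
   measurable_fun setT G -> comonotone F G ->
   (forall x y, F y <= F x -> G y <= G x -> Phi (F y) (G y) <= Phi (F x) (G x)) ->
   forall t : \bar R, measurable [set x | (t <= (Phi (F x) (G x))%:E)%E].
  move=> F G Phi mF mG cFG hP t; apply: (comono_meas mF mG cFG) => x y /= ty fy gy.
  by apply: le_trans ty _; rewrite lee_fin; exact: hP.
have coff : forall F : X -> R, comonotone F F.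
  by move=> F x y; rewrite -expr2 sqr_ge0.
have mLf : forall t : \bar R, measurable [set x | (t <= (f x `^ beta)%:E)%E].
  apply: (lvl f f (fun a _ => a `^ beta)) => // x y fy _.
  by apply: pwmono => //; [case/andP: (f01 y) | exact: ltW].
have mLg : forall t : \bar R, measurable [set x | (t <= (g x `^ gamma)%:E)%E].
  apply: (lvl g g (fun a _ => a `^ gamma)) => // x y fy _.
  by apply: pwmono => //; [case/andP: (g01 y) | exact: ltW].
have mLs : forall t : \bar R,
    measurable [set x | (t <= (star (f x) (g x) `^ alpha)%:E)%E].
  apply: (lvl f g (fun a b => star a b `^ alpha)) => // x y fy gy.
  apply: pwmono; [by case/andP: (sr _ _ (f01 y) (g01 y)) | | exact: ltW].
  exact: mono.
have [SfE /andP[A0 A1]] := fin01 (sug01 mm m1 (fun x => f x `^ beta) mLf).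
have [SgE /andP[B0 B1]] := fin01 (sug01 mm m1 (fun x => g x `^ gamma) mLg).
have [SsE /andP[C0 C1]] := fin01 (sug01 mm m1 (fun x => star (f x) (g x) `^ alpha) mLs).
apply: (@final _ _ _ _ _ cont smin).
- apply: pw01; [by rewrite A0 A1 | exact: ltW u0].
- apply: pw01; [by rewrite B0 B1 | exact: ltW t0].
- exact: powR_ge0.
exact: (@core _ _ _ _ _ _ _ _ _ _ _ _ _ _ _ _ f01 g01 co sr mono smin mm a0 b0 c0 l0 u0 t0 al bu gt lt lu mLf mLg mLs
  SfE SgE SsE A0 A1 B0 B1 C0 C1).
Qed.
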